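(* In the standing setting below, every alternative $c$-convex function $\phi:\mathbb{X}\to\mathbb{R}$ is Lipschitz with Lipschitz constant $\|c\|_{\mathrm{Lip}}$.
   Context: Standing setting: $\mathbb{X},\mathbb{Y}\subset\mathbb{R}^n$ are compact with non-empty interior; $c:\mathbb{X}\times\mathbb{Y}\to\mathbb{R}$ has continuous $D_xc$, $D_yc$, and continuous mixed second derivatives with $D^2_{xy}c=(D^2_{yx}c)^T$; for each $x$ the map $y\mapsto -D_xc(x,y)$ is injective on $\mathbb{Y}$ and for each $y$ the map $x\mapsto -D_yc(x,y)$ is injective on $\mathbb{X}$; $D^2_{xy}c(x,y)$ is invertible everywhere; for every $y$ the set $\{-D_yc(x,y):x\in\mathbb{X}\}$ is convex and for every $x$ the set $\{-D_xc(x,y):y\in\mathbb{Y}\}$ is convex. $\|c\|_{\mathrm{Lip}}=\sup_{(x_1,y_1)\ne(x_0,y_0)}\frac{|c(x_1,y_1)-c(x_0,y_0)|}{(\|x_1-x_0\|^2+\|y_1-y_0\|^2)^{1/2}}$. $c$-chord: for $X_i=(x_i,u_i)\in\mathbb{X}\times\mathbb{R}$, $F_{X_0X_1}(x)=\sup\{-c(x,y)+h: y\in\mathbb{Y},h\in\mathbb{R},-c(x_i,y)+h\le u_i, i=0,1\}$. $\phi:\mathbb{X}\to\mathbb{R}$ is alternative $c$-convex if for all $x_0,x_1\in\mathbb{X}$, with $X_i=(x_i,\phi(x_i))$, $\phi(x)\le F_{X_0X_1}(x)$ for all $x\in\mathbb{X}$. *)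

(* Defs.v *)
From HB Require Import structures.
From mathcomp Require Import all_boot all_order all_algebra.
From mathcomp Require Import all_classical all_reals all_analysis.
Set Implicit Arguments. Unset Strict Implicit. Unset Printing Implicit Defensive.
Import Order.TTheory GRing.Theory Num.Theory.
Import numFieldNormedType.Exports.
Local Open Scope classical_set_scope.
Local Open Scope ring_scope.

Section Defs.
Variables (R : realType) (n : nat).
Local Notation V := 'rV[R]_n.

Definition enorm (x : V) : R := Num.sqrt (\sum_(i < n) (x ord0 i) ^+ 2).

Definition ev (i : 'I_n) : V := delta_mx ord0 i.

Definition Dx (c : V -> V -> R) (x y : V) : V :=
  \row_i derive (fun x' => c x' y) x (ev i).
Definition Dy (c : V -> V -> R) (x y : V) : V :=
  \row_i derive (fun y' => c x y') y (ev i).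

(* mixed second derivatives:
   (D2xy c x y) i j = d/dy_j (d/dx_i c),  (D2yx c x y) i j = d/dx_j (d/dy_i c) *)
Definition D2xy (c : V -> V -> R) (x y : V) : 'M[R]_n :=
  \matrix_(i, j) derive (fun y' => Dx c x y' ord0 i) y (ev j).
Definition D2yx (c : V -> V -> R) (x y : V) : 'M[R]_n :=
  \matrix_(i, j) derive (fun x' => Dy c x' y ord0 i) x (ev j).

Definition convex_set (S : set V) : Prop :=
  forall a b t, S a -> S b -> 0 <= t <= 1 -> S ((1 - t) *: a + t *: b).

Definition standing_setting (X Y : set V) (c : V -> V -> R) : Prop :=
  [/\ compact X /\ interior X !=set0,
      compact Y /\ interior Y !=set0,
      (forall x y, X x -> Y y -> forall i,
          derivable (fun x' => c x' y) x (ev i) /\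
          derivable (fun y' => c x y') y (ev i)) /\
      {within X `*` Y, continuous (fun p => Dx c p.1 p.2)} /\
      {within X `*` Y, continuous (fun p => Dy c p.1 p.2)},
      (forall x y, X x -> Y y -> forall i j,
          derivable (fun y' => Dx c x y' ord0 i) y (ev j) /\
          derivable (fun x' => Dy c x' y ord0 i) x (ev j)) /\
      {within X `*` Y, continuous (fun p => D2xy c p.1 p.2)} /\
      {within X `*` Y, continuous (fun p => D2yx c p.1 p.2)} /\
      (forall x y, X x -> Y y -> D2xy c x y = (D2yx c x y)^T) &
      [/\
        (forall x, X x -> forall y1 y2, Y y1 -> Y y2 ->
            - Dx c x y1 = - Dx c x y2 -> y1 = y2),
        (forall y, Y y -> forall x1 x2, X x1 -> X x2 ->
            - Dy c x1 y = - Dy c x2 y -> x1 = x2),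
        (forall x y, X x -> Y y -> D2xy c x y \in unitmx),
        (forall y, Y y -> convex_set [set - Dy c x y | x in X]) &
        (forall x, X x -> convex_set [set - Dx c x y | y in Y])]].

Definition LipNorm (X Y : set V) (c : V -> V -> R) : \bar R :=
  ereal_sup [set r | exists x1 y1 x0 y0,
     [/\ X x1 /\ Y y1, X x0 /\ Y y0, (x1, y1) != (x0, y0) &
         r = (`|c x1 y1 - c x0 y0| /
              Num.sqrt (enorm (x1 - x0) ^+ 2 + enorm (y1 - y0) ^+ 2))%:E]].

Definition cchord (Y : set V) (c : V -> V -> R) (x0 : V) (u0 : R)
    (x1 : V) (u1 : R) (x : V) : \bar R :=
  ereal_sup [set r | exists y h,
     [/\ Y y, - c x0 y + h <= u0, - c x1 y + h <= u1 & r = (- c x y + h)%:E]].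

Definition alt_c_convex (X Y : set V) (c : V -> V -> R) (phi : V -> R) : Prop :=
  forall x0 x1, X x0 -> X x1 -> forall x, X x ->
    ((phi x)%:E <= cchord Y c x0 (phi x0) x1 (phi x1) x)%E.

End Defs.

(* Main.v *)
Require Import Defs.
From HB Require Import structures.
From mathcomp Require Import all_boot all_order all_algebra.
From mathcomp Require Import all_classical all_reals all_analysis.
From mathcomp Require Import lra.
Import Order.TTheory GRing.Theory Num.Theory.
Local Open Scope classical_set_scope.
Local Open Scope ring_scope.

Lemma enorm0 (R : realType) (n : nat) : enorm (0 : 'rV[R]_n) = 0.
Proof.
rewrite /enorm (eq_bigr (fun _ => 0)); last by move=> i _; rewrite mxE expr0n.
by rewrite big1 // sqrtr0.
Qed.

Lemma enormN (R : realType) (n : nat) (v : 'rV[R]_n) : enorm (- v) = enorm v.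
Proof.
rewrite /enorm; congr Num.sqrt; apply: eq_bigr => i _; by rewrite mxE sqrrN.
Qed.

Lemma enorm_eq0 (R : realType) (n : nat) (v : 'rV[R]_n) : enorm v = 0 -> v = 0.
Proof.
rewrite /enorm => /eqP; rewrite sqrtr_eq0 => H.
have H0 : \sum_(i < n) v ord0 i ^+ 2 = 0.
  by apply/eqP; rewrite eq_le H /=; apply: sumr_ge0 => i _; exact: sqr_ge0.
move/eqP: H0; rewrite psumr_eq0; last by move=> i _; exact: sqr_ge0.
move/allP => Hall; apply/rowP => i; rewrite mxE.
have := Hall i (mem_index_enum i); rewrite /= sqrf_eq0 => /eqP //.
Qed.

Lemma half (R : realType) (n : nat) (X Y : set 'rV[R]_n)
    (c : 'rV[R]_n -> 'rV[R]_n -> R) (phi : 'rV[R]_n -> R) (L : R) a b :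
  alt_c_convex X Y c phi -> LipNorm X Y c = L%:E -> X a -> X b ->
  0 < enorm (b - a) -> phi b - phi a <= L * enorm (b - a).
Proof.
move=> alt HL Xa Xb epos.
have H := alt a a Xa Xa b Xb.
have H2 : (cchord Y c a (phi a) a (phi a) b <= (phi a + L * enorm (b - a))%:E)%E.
  apply: ge_ereal_sup => r [y [h [Yy h1 _ ->]]].
  rewrite lee_fin.
  have Hr : ((`|c b y - c a y| / enorm (b - a))%:E <= LipNorm X Y c)%E.
    apply: ereal_sup_ubound; exists b, y, a, y; split => //.
      apply/negP => /eqP [] /eqP; rewrite -subr_eq0 => /eqP E.
      by move: epos; rewrite E enorm0 ltxx.
    by rewrite subrr enorm0 expr0n /= addr0 sqrtr_sqr (ger0_norm (ltW epos)).
  rewrite HL lee_fin ler_pdivrMr // in Hr.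
  have Hn : c a y - c b y <= `|c b y - c a y| by rewrite distrC ler_norm.
  lra.
have := le_trans H H2; rewrite lee_fin; lra.
Qed.

Theorem lemma4p4 (R : realType) (n : nat) (X Y : set 'rV[R]_n)
    (c : 'rV[R]_n -> 'rV[R]_n -> R) (phi : 'rV[R]_n -> R) :
  standing_setting X Y c ->
  alt_c_convex X Y c phi ->
  forall x0 x1, X x0 -> X x1 ->
    ((`|phi x1 - phi x0|)%:E <= LipNorm X Y c * (enorm (x1 - x0))%:E)%E.
Proof.
move=> [_ [_ [y0 /interior_subset Yy0]] _ _ _] alt x0 x1 X0 X1.
have [->|ne] := eqVneq x1 x0.
  by rewrite !subrr normr0 enorm0 mule0.
have epos : 0 < enorm (x1 - x0).
  rewrite lt_neqAle sqrtr_ge0 andbT eq_sym; apply/negP => /eqP /enorm_eq0 /eqP.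
  by rewrite subr_eq0 (negbTE ne).
case HL: (LipNorm X Y c) => [L| |].
- have Ee : enorm (x0 - x1) = enorm (x1 - x0) by rewrite -opprB enormN.
  have H1 := @half _ _ X Y c phi L _ _ alt HL X1 X0.
  rewrite Ee in H1; have {H1}H1 := H1 epos.
  have H2 := @half _ _ X Y c phi L _ _ alt HL X0 X1 epos.
  rewrite -EFinM lee_fin ler_norml; apply/andP; split; lra.
- by rewrite mulyr gtr0_sg // mul1e leey.
- exfalso.
  have Hr : ((`|c x1 y0 - c x0 y0| / enorm (x1 - x0))%:E <= LipNorm X Y c)%E.
    apply: ereal_sup_ubound; exists x1, y0, x0, y0; split => //.
      by apply/negP => /eqP [] /eqP; rewrite (negbTE ne).
    by rewrite subrr enorm0 expr0n /= addr0 sqrtr_sqr (ger0_norm (ltW epos)).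
  by rewrite HL leeNy_eq in Hr.
Qed.
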